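(* Let $\mathbb{F}$ be a field, $n,d$ positive integers, and $P_n=\mathbb{F}[x_1,\dots,x_n]$. For $k\ge 3$ let $D_k$ be the set of monomials of degree $k$ in $x_1,\dots,x_{k-1}$ not divisible by $x_{k-1}^2$ (if $n<k-1$, $D_k$ is the set of all monomials of degree $k$ in $x_1,\dots,x_n$); let $K_n\subseteq P_n$ be the ideal generated by $x_1^3,\dots,x_n^3$ and $\bigcup_{k=3}^{n+1}D_k$, and let $K_{n,d}\subseteq P_n$ be the ideal generated by those of these generators of $K_n$ that have degree $\le d$. Let $\mu\in P_n$ be a monomial of degree $d-1$ which does not end in $x_{d-2}^2$, and assume $\mu\notin K_n$. Then there exists a monomial $M$ which is a multiple of $\mu$, has degree $2n-d+2$, and satisfies $M\notin K_{n,d}$.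
   Context: A monomial $m$ is said to end in $x_j^{e}$ if $m=x_1^{a_1}\cdots x_{j-1}^{a_{j-1}}x_j^{e}$, i.e. $m$ involves no variable $x_i$ with $i>j$ and the exponent of $x_j$ in $m$ is $e$. *)

(* Defs.v *)
From HB Require Import structures.
From mathcomp Require Import all_boot all_order all_algebra.
From mathcomp Require Import mpoly.
Set Implicit Arguments. Unset Strict Implicit. Unset Printing Implicit Defensive.
Import GRing.Theory.
Local Open Scope ring_scope.

(* Variables x_1, ..., x_n are indexed 0-based by 'I_n: x_(i+1) <-> i. *)

Definition ideal_gen (F : fieldType) (n : nat) (S : {mpoly F[n]} -> Prop)
    (p : {mpoly F[n]}) : Prop :=
  exists r : seq ({mpoly F[n]} * {mpoly F[n]}),
    (forall x, x \in r -> S x.2) /\ p = \sum_(x <- r) x.1 * x.2.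

Definition cube_mon (n : nat) (m : 'X_{1..n}) : Prop :=
  exists i : 'I_n, m = (U_(i) *+ 3)%MM.

Definition in_D (n k : nat) (m : 'X_{1..n}) : Prop :=
  if (k.-1 <= n)%N then
    [/\ mdeg m = k,
        (forall i : 'I_n, (k.-1 <= i)%N -> m i = 0%N) &
        (forall i : 'I_n, nat_of_ord i = k.-2 -> (m i < 2)%N)]
  else mdeg m = k.

Definition K_gen (n : nat) (m : 'X_{1..n}) : Prop :=
  cube_mon m \/ exists k : nat, [/\ (3 <= k)%N, (k <= n.+1)%N & in_D k m].

Definition K_ideal (F : fieldType) (n : nat) : {mpoly F[n]} -> Prop :=
  ideal_gen (fun p => exists m : 'X_{1..n}, K_gen m /\ p = 'X_[m]).

Definition Knd_ideal (F : fieldType) (n d : nat) : {mpoly F[n]} -> Prop :=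
  ideal_gen (fun p => exists m : 'X_{1..n},
    [/\ K_gen m, (mdeg m <= d)%N & p = 'X_[m]]).

(* m ends in x_j^e (j is 1-based): x_j is a variable (1 <= j <= n), no x_i
   with i > j occurs, and the exponent of x_j is e. *)
Definition ends_in (n : nat) (m : 'X_{1..n}) (j e : nat) : Prop :=
  [/\ (1 <= j)%N, (j <= n)%N,
      (forall i : 'I_n, (j <= i)%N -> m i = 0%N) &
      (forall i : 'I_n, nat_of_ord i = j.-1 -> m i = e)].

(* Main.v *)
Require Import Defs.
From HB Require Import structures.
From mathcomp Require Import all_boot all_order all_algebra.
From mathcomp Require Import mpoly.
From mathcomp Require Import zify.
From Stdlib Require Import Classical.
Import GRing.Theory.
Local Open Scope ring_scope.
Set Implicit Arguments.
Unset Strict Implicit.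

Definition ps n (m : 'X_{1..n}) (q : nat) : nat := (\sum_(i < n | (i < q)%N) m i)%N.
Definition cnd n (m : 'X_{1..n}) (q : 'I_n) : bool := (ps m q + (0 < m q) <= q.+1)%N.

Lemma ps_step n (m : 'X_{1..n}) q (h : (q < n)%N) : ps m q.+1 = (ps m q + m (Ordinal h))%N.
Proof.
rewrite /ps (bigD1 (Ordinal h)) //= addnC; congr addn; apply: eq_bigl => i.
rewrite -val_eqE /=; apply/idP/idP; lia.
Qed.

Lemma ps_ge n (m : 'X_{1..n}) q : (n <= q)%N -> ps m q = mdeg m.
Proof. by move=> h; rewrite mdegE /ps; apply: eq_bigl => i; rewrite (leq_trans (ltn_ord i) h). Qed.

Lemma ps0 n (m : 'X_{1..n}) : ps m 0 = 0%N.
Proof. by rewrite /ps big_pred0 // => i; rewrite ltn0. Qed.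

Lemma ps_zero_tail n (m : 'X_{1..n}) j :
  (forall i : 'I_n, (j <= i)%N -> m i = 0%N) -> ps m j = mdeg m.
Proof.
move=> H; rewrite mdegE (bigID (fun i : 'I_n => (i < j)%N)) /=.
by rewrite [X in (_ + X)%N]big1 ?addn0 // => i; rewrite -leqNgt => /H.
Qed.

Lemma ps_le_m n (m m' : 'X_{1..n}) q : (m <= m')%MM -> (ps m q <= ps m' q)%N.
Proof. by move/mnm_lepP => H; apply: leq_sum => i _. Qed.

Lemma ps_ext n (m m' : 'X_{1..n}) q :
  (forall i : 'I_n, (i < q)%N -> m i = m' i) -> ps m q = ps m' q.
Proof. by move=> H; apply: eq_bigr => i /H. Qed.

Lemma ps_mono n (m : 'X_{1..n}) q q' : (q <= q')%N -> (ps m q <= ps m q')%N.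
Proof.
move=> h; rewrite /ps !(big_mkcond (fun i : 'I_n => (i < _)%N)) /=.
apply: leq_sum => i _; case: ifP => a; case: ifP => b //; lia.
Qed.

Lemma psU n (m : 'X_{1..n}) (i : 'I_n) q : ps (m + U_(i))%MM q = (ps m q + (i < q))%N.
Proof.
rewrite /ps; under eq_bigr do rewrite mnmDE mnm1E.
rewrite big_split /=; congr addn.
case: (ltnP i q) => hi.
  rewrite (bigD1 i) //= eqxx big1 // => j /andP[_ hj].
  by rewrite eq_sym (negbTE hj).
by apply: big1 => j hj; case: eqP => // e; subst; lia.
Qed.

Lemma ps_add_le n (m : 'X_{1..n}) t (i : 'I_n) : (t <= i)%N -> (ps m t + m i <= mdeg m)%N.
Proof.
move=> h; have e := ps_step m (ltn_ord i).
have ei : Ordinal (ltn_ord i) = i by apply: val_inj.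
rewrite ei in e.
rewrite -(ps_ge m (leqnn n)).
apply: leq_trans (ps_mono m (ltn_ord i)); rewrite e leq_add2r; exact: ps_mono.
Qed.

Lemma sub_deg n (m : 'X_{1..n}) k : (k <= mdeg m)%N -> exists g, (g <= m)%MM /\ mdeg g = k.
Proof.
move e : (mdeg m - k)%N => j; elim: j m e => [|j IH] m e hk.
  by exists m; split; [exact: lepm_refl | lia].
have [i hi] : exists i, (0 < m i)%N.
  apply: NNPP => H; move: e; rewrite mdegE big1 // => i _; apply/eqP.
  by rewrite -leqn0 leqNgt; apply/negP => h; apply: H; exists i.
have hU : (U_(i) <= m)%MM by apply/mnm_lepP => l; rewrite mnm1E; case: eqP => // <-.
have ed : mdeg (m - U_(i))%MM = (mdeg m).-1.
  by rewrite -{2}(submK hU) mdegD mdeg1 addn1.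
have [g [hg1 hg2]] := IH (m - U_(i))%MM ltac:(lia) ltac:(lia).
exists g; split => //; apply: lepm_trans hg1 _.
by apply/mnm_lepP => l; rewrite mnmBE leq_subr.
Qed.

Lemma inc n j : forall m : 'X_{1..n}, (j <= n)%N -> (forall i, m i <= 2)%N ->
  (forall r : 'I_n, (1 <= r < j)%N -> cnd m r) -> (ps m j < j)%N ->
  exists i : 'I_n, [/\ (i < j)%N, (m i < 2)%N &
     forall r : 'I_n, (1 <= r < j)%N -> cnd (m + U_(i))%MM r].
Proof.
elim: j => [|j IH] m hj h2 hc hps; first by rewrite ltn0 in hps.
have hjn : (j < n)%N by lia.
have e := ps_step m hjn; set q := Ordinal hjn in e.
have hr : forall r : 'I_n, (1 <= r < j.+1)%N -> (r < j)%N \/ r = q.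
  move=> r hr; case: (ltnP r j) => h; [by left | right; apply: val_inj => /=; lia].
case: (ltnP (m q) 2) => hq.
  exists q; split => //= r /[dup] hr1 /hr [rj|->].
    rewrite /cnd psU mnmDE mnm1E.
    have -> : (q < r)%N = false by rewrite /=; lia.
    have -> : (q == r) = false by apply/negP => /eqP e'; rewrite -e' /= in rj; lia.
    rewrite !addn0; apply: hc; lia.
  rewrite /cnd psU mnmDE mnm1E eqxx /= ltnn addn0 addn1 /=; lia.
have hq2 : m q = 2%N by have := h2 q; lia.
have [i [hi1 hi2 hi3]] := IH m ltac:(lia) h2 ltac:(move=> r hr'; apply: hc; lia) ltac:(lia).
exists i; split => //; first lia.
move=> r /[dup] hr1 /hr [rj|->]; first by apply: hi3; lia.
rewrite /cnd psU mnmDE mnm1E /= hi1.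
have -> : (i == q) = false by apply/negP => /eqP e'; rewrite e' /= in hi1; lia.
rewrite hq2 /=; lia.
Qed.

Lemma fill n j k : forall m : 'X_{1..n}, (j <= n)%N -> (forall i, m i <= 2)%N ->
  (forall r : 'I_n, (1 <= r < j)%N -> cnd m r) -> (ps m j + k <= j)%N ->
  exists m', [/\ (m <= m')%MM, (forall i, m' i <= 2)%N,
     (forall r : 'I_n, (1 <= r < j)%N -> cnd m' r) & ps m' j = (ps m j + k)%N].
Proof.
elim: k => [|k IH] m hj h2 hc hk.
  by exists m; split => //; [exact: lepm_refl | rewrite addn0].
have [i [hi1 hi2 hi3]] := inc hj h2 hc ltac:(lia).
have h2' : forall l, ((m + U_(i))%MM l <= 2)%N.
  by move=> l; rewrite mnmDE mnm1E; case: eqP => [<-|_]; [lia | rewrite addn0].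
have [m' [h1 h2'' h3 h4]] := IH _ hj h2' hi3 ltac:(rewrite psU hi1; lia).
exists m'; split => //; last by rewrite h4 psU hi1; lia.
apply: lepm_trans h1; apply/mnm_lepP => l; rewrite mnmDE; exact: leq_addr.
Qed.

Lemma Lb n (m : 'X_{1..n}) s (h : (s < n)%N) : (forall i, m i <= 2)%N ->
  (forall r : 'I_n, (1 <= r)%N -> cnd m r) ->
  (ps m s.+1 <= s.+2)%N /\ (ps m s.+1 = s.+2 -> m (Ordinal h) = 2%N).
Proof.
move=> h2 hc; rewrite ps_step; have := h2 (Ordinal h).
case: s h => [|s] h.
  by rewrite ps0 /=; lia.
have := hc (Ordinal h) isT; rewrite /cnd /=; lia.
Qed.

Lemma coefMX_nle (F : fieldType) n (p : {mpoly F[n]}) (g m : 'X_{1..n}) :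
  ~~ (g <= m)%MM -> (p * 'X_[g])@_m = 0.
Proof.
move=> hg; rewrite [p]mpolyE mulr_suml raddf_sum /= big1 // => k _.
rewrite -scalerAl -mpolyXD mcoeffZ mcoeffX.
case: eqP => [e|]; last by rewrite mulr0.
exfalso; move/negP: hg; apply; rewrite -e; apply/mnm_lepP => i.
by rewrite mnmDE leq_addl.
Qed.

Lemma ideal_mono (F : fieldType) n (S : {mpoly F[n]} -> Prop) (P : 'X_{1..n} -> Prop) (m : 'X_{1..n}) :
  (forall p, S p -> exists g, P g /\ p = 'X_[g]) ->
  ideal_gen S 'X_[m] -> exists g, P g /\ (g <= m)%MM.
Proof.
move=> HS [r [hr e]]; apply: NNPP => H.
have : ('X_[m] : {mpoly F[n]})@_m = 0.
  rewrite e raddf_sum /= big1_seq // => x /andP[_ /hr /HS [g [Pg ->]]].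
  apply: coefMX_nle; apply/negP => hle; apply: H; by exists g.
by rewrite mcoeffX eqxx => /eqP; rewrite oner_eq0.
Qed.

Lemma mono_ideal (F : fieldType) n (S : {mpoly F[n]} -> Prop) (m g : 'X_{1..n}) :
  S 'X_[g] -> (g <= m)%MM -> ideal_gen S 'X_[m].
Proof.
move=> Pg hle; exists [:: ('X_[m - g], 'X_[g])]; split.
  by move=> x; rewrite inE => /eqP -> /=.
by rewrite big_seq1 /= -mpolyXD submK.
Qed.

Lemma K_gen_deg n (g : 'X_{1..n}) : K_gen g -> (3 <= mdeg g)%N.
Proof.
case=> [[i ->]|[k [hk _ hD]]]; first by rewrite mdegMn mdeg1.
by move: hD; rewrite /in_D; case: ifP => _ => [[-> _ _]|->].
Qed.

Unset Implicit Arguments.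
Set Strict Implicit.

Theorem mainTheorem12 (F : fieldType) (n d : nat)
    (hn : (0 < n)%N) (hd : (0 < d)%N) (mu : 'X_{1..n})
    (hdeg : mdeg mu = d.-1)
    (hend : ~ ends_in mu (d - 2) 2)
    (hK : ~ @K_ideal F n 'X_[mu]) :
  exists M : 'X_{1..n},
    [/\ (mu <= M)%MM, mdeg M = (2 * n + 2 - d)%N & ~ @Knd_ideal F n d 'X_[M]].
Proof.
have knd : forall M : 'X_{1..n}, ~ @Knd_ideal F n d 'X_[M] <->
   (forall g, K_gen g -> (mdeg g <= d)%N -> ~~ (g <= M)%MM).
  move=> M; split.
    move=> H g Kg hg; apply/negP => hle; apply: H.
    by apply: (mono_ideal (g := g)) => //; exists g.
  move=> H /(ideal_mono (P := fun g => K_gen g /\ (mdeg g <= d)%N)) [].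
    by move=> p [g [? ? ?]]; exists g.
  by move=> g [[Kg hg] hle]; move: (H g Kg hg); rewrite hle.
have hKc : forall g, K_gen g -> ~~ (g <= mu)%MM.
  move=> g Kg; apply/negP => le; apply: hK.
  by apply: (mono_ideal (g := g)) => //; exists g.
have A1 : forall i, (mu i <= 2)%N.
  move=> i; rewrite leqNgt; apply/negP => h.
  have := hKc (U_(i) *+ 3)%MM (or_introl (ex_intro _ i erefl)).
  move/negP; apply; apply/mnm_lepP => j; rewrite mulmnE mnm1E.
  by case: eqP => [<-|]; lia.
have A2 : forall q : 'I_n, (1 <= q)%N -> cnd mu q.
  move=> q hq; rewrite /cnd leqNgt; apply/negP => hv.
  pose b : nat := (0 < mu q)%N.
  pose pm := [multinom (if (i < q)%N then mu i else 0%N) | i < n].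
  have hpm : mdeg pm = ps mu q.
    by rewrite mdegE /ps [in RHS]big_mkcond; apply: eq_bigr => i _; rewrite mnmE.
  have [g' [hg'1 hg'2]] := @sub_deg n pm (q.+2 - b) ltac:(rewrite /b; lia).
  have hg0 : forall i : 'I_n, (q <= i)%N -> g' i = 0%N.
    move=> i hi; move/mnm_lepP: hg'1 => /(_ i); rewrite mnmE.
    by rewrite ltnNge hi /=; lia.
  pose g := (g' + U_(q) *+ b)%MM.
  apply: (negP (hKc g _)).
    have := ltn_ord q; right; exists q.+2; split; [lia | lia |].
    rewrite /in_D /= ifT; last lia.
    split.
    - rewrite /g mdegD mdegMn mdeg1 hg'2 /b; lia.
    - move=> i hi; rewrite /g mnmDE mulmnE mnm1E hg0; last lia.
      by case: eqP => // e; rewrite -e in hi; lia.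
    - move=> i hi; rewrite /g mnmDE mulmnE mnm1E hg0; last lia.
      by rewrite /b; case: eqP; lia.
  apply/mnm_lepP => i; rewrite /g mnmDE mulmnE mnm1E.
  case: (eqVneq q i) => [<-|hqi].
    by rewrite hg0 // /b; lia.
  rewrite mul0n addn0; move/mnm_lepP: hg'1 => /(_ i); rewrite mnmE.
  by case: ifP => _ h //; lia.
have [hd2|hd3] := leqP d 2.
  exists (mu + U_(Ordinal hn) *+ (2 * n + 2 - d - d.-1))%MM; split.
  - by apply/mnm_lepP => i; rewrite mnmDE leq_addr.
  - by rewrite mdegD mdegMn mdeg1 hdeg; lia.
  - by apply/knd => g /K_gen_deg h1 h2; lia.
pose t := (d - 2)%N.
have ht1 : (1 <= t)%N by rewrite /t; lia.
have [htn hpt] : (t <= n)%N /\ (ps mu t <= t)%N.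
  case: (ltnP t.-1 n) => hs.
    have [L1 L2] := Lb hs A1 A2.
    have et : t.-1.+1 = t by rewrite prednK.
    rewrite et in L1 L2; split; first lia.
    rewrite leqNgt; apply/negP => hgt.
    have e1 : ps mu t = t.+1 by lia.
    apply: hend; rewrite -/t; split; [lia | lia | |].
    - move=> i hi; have := ps_add_le mu hi; rewrite hdeg e1; lia.
    - move=> i hi; have -> : i = Ordinal hs by apply: val_inj.
      exact: L2.
  have hn1 : (n.-1 < n)%N by lia.
  have [L1 _] := Lb hn1 A1 A2.
  move: L1; rewrite prednK // ps_ge // hdeg; lia.
have [M0 [hM01 hM02 hM03 hM04]] := @fill n t (t - ps mu t) mu htn A1
   (fun r hr => A2 r ltac:(lia)) ltac:(lia).
pose M := [multinom (if (i < t)%N then M0 i else 2%N) | i < n].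
have hM2 : forall i, (M i <= 2)%N.
  by move=> i; rewrite mnmE; case: ifP.
have hpsMt : ps M t = t.
  rewrite (ps_ext (m' := M0)) ?hM04; first lia.
  by move=> i hi; rewrite mnmE hi.
have hMc : forall q : 'I_n, (1 <= q <= t)%N -> cnd M q.
  move=> q /andP[hq1 hq2]; case: (ltnP q t) => hqt.
    rewrite /cnd (ps_ext (m' := M0)); last first.
      by move=> i hi; rewrite mnmE (ltn_trans hi hqt).
    rewrite mnmE hqt; have := hM03 q; rewrite /cnd; apply; lia.
  have eq : nat_of_ord q = t by lia.
  by rewrite /cnd eq hpsMt; lia.
exists M; split.
- apply/mnm_lepP => i; rewrite mnmE; case: ifP => _; last exact: A1.
  by move/mnm_lepP: hM01.
- have hk : forall k, (t + k <= n)%N -> ps M (t + k) = (t + 2 * k)%N.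
    elim=> [|k IH] hk; first by rewrite !addn0.
    have hlt : (t + k < n)%N by lia.
    rewrite addnS ps_step IH; last lia.
    rewrite mnmE ltnNge leq_addr /=; lia.
  rewrite -(ps_ge M (leqnn n)).
  have e2 : ps M n = ps M (t + (n - t)) by congr (ps M _); lia.
  rewrite e2 hk; last lia.
  rewrite /t; lia.
- apply/knd => g Kg hgd; apply/negP => hgM.
  case: Kg => [[i ei]|[k [hk3 hkn hD]]].
    move/mnm_lepP: hgM => /(_ i); rewrite ei mulmnE mnm1E eqxx.
    have := hM2 i; lia.
  move: hD; rewrite /in_D ifT; last lia.
  case=> hdg hsupp hlt.
  have hq : (k - 2 < n)%N by lia.
  pose q := Ordinal hq.
  have e1 : mdeg g = (ps g (k - 2) + g q)%N.
    rewrite -(ps_zero_tail (j := (k - 2).+1)) ?ps_step //.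
    move=> i hi; apply: hsupp; lia.
  have h1 := ps_le_m (k - 2) hgM.
  have h2 : (g q <= M q)%N by move/mnm_lepP: hgM.
  have h3 : (g q < 2)%N by apply: hlt => /=; lia.
  have hb : (g q <= (0 < M q))%N.
    by move: h2 h3; case: (M q) => [|x] /=; lia.
  have := hMc q ltac:(rewrite /=; lia); rewrite /cnd /=.
  lia.
Qed.
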